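(* Let $q\ge 7$ be a prime power and $\mathcal{K}$ a set of $q(q-3)$ points in $\mathrm{PG}(2,q)$. Then there exists a line $L$ with $|L\cap\mathcal{K}|\notin\{0,q-3,q-2\}$.
   Context: $\mathrm{PG}(2,q)$ is the projective plane of $\mathbb{F}_q^3$; points are $1$-dimensional and lines $2$-dimensional subspaces. *)

(* Defs.v *)
(* PG(2,q) over a finite field F with #|F| = q.
   A subspace of F^3 is represented canonically by the square matrix <<A>>%MS
   (its row space); genmx gives a unique representative of each subspace. *)
From HB Require Import structures.
From mathcomp Require Import all_boot all_order all_algebra all_field.
Set Implicit Arguments. Unset Strict Implicit. Unset Printing Implicit Defensive.
Import GRing.Theory.
Local Open Scope ring_scope.

Definition is_subspace (F : fieldType) (k : nat) (A : 'M[F]_3) : bool :=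
  (\rank A == k)%N && (<<A>>%MS == A).

Definition pg_point (F : fieldType) (A : 'M[F]_3) : bool := is_subspace 1 A.
Definition pg_line (F : fieldType) (A : 'M[F]_3) : bool := is_subspace 2 A.

Definition incident (F : fieldType) (P L : 'M[F]_3) : bool := (P <= L)%MS.

(* Main.v *)
Require Import Defs.
From HB Require Import structures.
From mathcomp Require Import all_boot all_order all_algebra all_field.
From mathcomp Require Import zify.
Set Implicit Arguments. Unset Strict Implicit. Unset Printing Implicit Defensive.
Import GRing.Theory.
Local Open Scope ring_scope.

Lemma canon_eq (F : fieldType) (A B : 'M[F]_3) : <<A>>%MS = A -> <<B>>%MS = B ->
  (A <= B)%MS -> (\rank B <= \rank A)%N -> A = B.
Proof.
move=> gA gB sAB rBA.
have := mxrank_leqif_eq sAB => -[_ e].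
have: (A == B)%MS by rewrite -e eqn_leq rBA mxrankS.
by move/genmxP; rewrite gA gB.
Qed.

Lemma pt_of_vec (F : fieldType) (w : 'rV[F]_3) : w != 0 -> pg_point <<w>>%MS.
Proof. by move=> nz; rewrite /pg_point /is_subspace genmx_id eqxx genmxE rank_rV nz. Qed.

Lemma pt_vec_eq (F : fieldType) (P : 'M[F]_3) (w : 'rV[F]_3) :
  pg_point P -> w != 0 -> (w <= P)%MS -> <<w>>%MS = P.
Proof.
move=> /andP [/eqP rP /eqP gP] nz wP; apply: canon_eq => //; first exact: genmx_id.
  by rewrite genmxE.
by rewrite genmxE rank_rV nz rP.
Qed.

Lemma line_of (F : fieldType) m (P : 'M[F]_3) (w : 'M[F]_(m,3)) :
  pg_point P -> (\rank w <= 1)%N -> ~~ (w <= P)%MS ->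
  [/\ pg_line <<(P + w)%MS>>%MS, (P <= <<(P + w)%MS>>)%MS & (w <= <<(P + w)%MS>>)%MS].
Proof.
move=> /andP [/eqP rP /eqP gP] rw nwP.
rewrite !genmxE addsmxSl addsmxSr; split=> //.
rewrite /pg_line /is_subspace genmx_id eqxx andbT genmxE.
have [le1 _] := mxrank_adds_leqif P w.
have [le2 e2] := mxrank_leqif_sup (addsmxSl P w).
have : \rank P != \rank (P + w)%MS by rewrite e2 addsmx_sub submx_refl.
rewrite rP in le1 le2 *; rewrite eqn_leq; move: le1 le2; lia.
Qed.

Lemma line_eq (F : fieldType) m (P L : 'M[F]_3) (w : 'M[F]_(m,3)) :
  pg_point P -> pg_line L -> (\rank w <= 1)%N -> ~~ (w <= P)%MS ->
  (P <= L)%MS -> (w <= L)%MS -> <<(P + w)%MS>>%MS = L.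
Proof.
move=> pP lL rw nwP PL wL.
have [l1 _ _] := line_of pP rw nwP.
move: (l1) (lL) => /andP [/eqP r1 _] /andP [/eqP rL /eqP gL].
apply: canon_eq => //; first exact: genmx_id.
  by rewrite genmxE addsmx_sub PL.
by rewrite r1 rL.
Qed.

Lemma pt_neq_nsub (F : fieldType) (P Q : 'M[F]_3) :
  pg_point P -> pg_point Q -> P != Q -> ~~ (Q <= P)%MS.
Proof.
move=> /andP [/eqP rP /eqP gP] /andP [/eqP rQ /eqP gQ] nPQ; apply/negP => QP.
by move: nPQ; rewrite (canon_eq gQ gP QP) ?rP ?rQ ?eqxx.
Qed.

Lemma unique_line (F : finFieldType) (X P : 'M[F]_3) :
  pg_point X -> pg_point P -> X != P ->
  [set L | pg_line L & (X <= L)%MS && (P <= L)%MS] = [set <<(X + P)%MS>>%MS].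
Proof.
move=> pX pP nXP.
have rP : (\rank P <= 1)%N by case/andP: pP => /eqP ->.
have nPX := pt_neq_nsub pX pP nXP.
have [l1 s1 s2] := line_of pX rP nPX.
apply/setP=> L; rewrite !inE; apply/idP/eqP.
  by case/andP=> lL /andP [XL PL]; rewrite (line_eq pX lL rP nPX XL PL).
by move=> ->; rewrite l1 s1 s2.
Qed.

Lemma meet_exists (F : fieldType) (L M : 'M[F]_3) :
  pg_line L -> pg_line M -> exists P, [/\ pg_point P, (P <= L)%MS & (P <= M)%MS].
Proof.
move=> /andP [/eqP rL _] /andP [/eqP rM _].
have := mxrank_sum_cap L M; rewrite rL rM.
have := rank_leq_col (L + M)%MS => h1 h2.
have nz : (L :&: M)%MS != 0.
  by rewrite -mxrank_eq0; apply/eqP => h; move: h2; rewrite h; lia.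
set w := nz_row (L :&: M)%MS.
have wnz : w != 0 by rewrite nz_row_eq0.
have wLM := nz_row_sub (L :&: M)%MS.
exists <<w>>%MS; split; first exact: pt_of_vec.
  by rewrite genmxE (submx_trans wLM) // capmxSl.
by rewrite genmxE (submx_trans wLM) // capmxSr.
Qed.

Lemma card_sub (F : finFieldType) m n (A : 'M[F]_(m,n)) :
  #|[set w : 'rV[F]_n | (w <= A)%MS]| = (#|F| ^ \rank A)%N.
Proof.
have ->: [set w : 'rV[F]_n | (w <= A)%MS] =
   [set x *m row_base A | x in [set: 'rV[F]_(\rank A)]].
  apply/setP=> w; rewrite inE; apply/idP/imsetP.
    move=> /submxP [D ->].
    have: (D *m A <= row_base A)%MS by rewrite eq_row_base submxMl.
    by case/submxP=> E ->; exists E; rewrite ?inE.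
  by case=> x _ ->; rewrite -(eq_row_base A) submxMl.
rewrite card_imset; last exact: row_free_inj (row_base_free A).
by rewrite cardsT card_mx mul1n.
Qed.

Lemma card_sub0 (F : finFieldType) m n (A : 'M[F]_(m,n)) :
  #|[set w : 'rV[F]_n | (w <= A)%MS] :\ 0| = (#|F| ^ \rank A - 1)%N.
Proof.
have := cardsD1 0 [set w : 'rV[F]_n | (w <= A)%MS].
by rewrite card_sub inE sub0mx => ->; rewrite addKn.
Qed.

Lemma fiber_count (T U : finType) (S : {set T}) (V : {set U}) (f : T -> U) k :
  (forall x, x \in S -> f x \in V) ->
  (forall y, y \in V -> #|[set x in S | f x == y]| = k) -> #|S| = (#|V| * k)%N.
Proof.
move=> fSV Hk.
rewrite -sum1_card (partition_big f (mem V)) //= -sum_nat_const.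
apply: eq_bigr => y Vy; rewrite -(Hk y Vy) -sum1_card.
by apply: eq_bigl => x; rewrite inE.
Qed.

Lemma pts_on_line (F : finFieldType) (L : 'M[F]_3) : pg_line L ->
  #|[set P | pg_point P & (P <= L)%MS]| = (#|F|).+1.
Proof.
move=> lL; have rL : \rank L = 2%N by case/andP: lL => /eqP.
have q1 : (1 < #|F|)%N.
  by rewrite (cardD1 0) (cardD1 1) !inE oner_eq0.
set V := [set P | pg_point P & (P <= L)%MS].
have H1 : forall w, w \in [set w : 'rV[F]_3 | (w <= L)%MS] :\ 0 -> <<w>>%MS \in V.
  move=> w; rewrite !inE => /andP [nz wL]; rewrite pt_of_vec //= genmxE //.
have H2 : forall P, P \in V -> #|[set x in [set w : 'rV[F]_3 | (w <= L)%MS] :\ 0 | <<x>>%MS == P]| = (#|F| - 1)%N.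
  move=> P; rewrite inE => /andP [pP PL].
  have rP : \rank P = 1%N by case/andP: pP => /eqP.
  rewrite (_ : (#|F| - 1 = #|F| ^ \rank P - 1)%N); last by rewrite rP expn1.
  rewrite -card_sub0; apply: eq_card => w; rewrite !inE.
  apply/idP/idP.
    by case/andP=> /andP [nz wL] /eqP <-; rewrite nz genmxE submx_refl.
  case/andP=> nz wP; rewrite nz (submx_trans wP PL) /=.
  by rewrite (pt_vec_eq pP nz wP).
have := fiber_count H1 H2; rewrite card_sub0 rL.
move: #|V| => c; nia.
Qed.

Lemma lines_through (F : finFieldType) (P : 'M[F]_3) : pg_point P ->
  #|[set L | pg_line L & (P <= L)%MS]| = (#|F|).+1.
Proof.
move=> pP; have rP : \rank P = 1%N by case/andP: pP => /eqP.
have q1 : (1 < #|F|)%N.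
  by rewrite (cardD1 0) (cardD1 1) !inE oner_eq0.
set V := [set L | pg_line L & (P <= L)%MS].
set S := ~: [set w : 'rV[F]_3 | (w <= P)%MS].
have H1 : forall w, w \in S -> <<(P + w)%MS>>%MS \in V.
  move=> w; rewrite !inE => nwP.
  have [l1 s1 _] := line_of pP (rank_leq_row w) nwP.
  by rewrite l1 s1.
have H2 : forall L, L \in V -> #|[set x in S | <<(P + x)%MS>>%MS == L]| = (#|F| ^ 2 - #|F|)%N.
  move=> L; rewrite inE => /andP [lL PL].
  have rL : \rank L = 2%N by case/andP: lL => /eqP.
  have -> : [set x in S | <<(P + x)%MS>>%MS == L] =
      [set w : 'rV[F]_3 | (w <= L)%MS] :\: [set w : 'rV[F]_3 | (w <= P)%MS].
    apply/setP => w; rewrite !inE; apply/idP/idP.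
      case/andP=> nwP /eqP <-; rewrite nwP /=.
      by have [_ _ ->] := line_of pP (rank_leq_row w) nwP.
    case/andP=> nwP wL; rewrite nwP /=.
    by rewrite (line_eq pP lL (rank_leq_row w) nwP PL wL).
  rewrite cardsD (setIidPr _); last first.
    by apply/subsetP => w; rewrite !inE => wP; apply: submx_trans wP PL.
  by rewrite !card_sub rL rP expn1.
have := fiber_count H1 H2.
have := cardsC [set w : 'rV[F]_3 | (w <= P)%MS].
rewrite card_sub rP card_mx expn1 mul1n -/S => h1 h2.
have e : (#|S| = #|F| ^ 3 - #|F|)%N by rewrite -h1 addKn.
rewrite e in h2.
move: #|V| h2 => c; move: #|F| q1 => q q1.
rewrite !expnS expn0 !muln1 => h2.
have pos : (0 < q * q - q)%N by nia.
have e2 : (q * (q * q) - q = q.+1 * (q * q - q))%N.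
  rewrite mulnBr mulSn mulnA; nia.
by apply/eqP; rewrite -(eqn_pmul2r pos) -h2 e2.
Qed.

Lemma sum_ind (T : finType) (A : {set T}) (b : pred T) :
  (\sum_(x in A) (b x : nat) = #|[set x in A | b x]|)%N.
Proof.
transitivity (\sum_(x in A | b x) 1)%N.
  by rewrite big_mkcondr /=; apply: eq_bigr => x _; case: (b x).
by rewrite -sum1_card; apply: eq_bigl => x; rewrite inE.
Qed.

Lemma partition_through (F : finFieldType) (K : {set 'M[F]_3}) (X : 'M[F]_3) :
  pg_point X -> (forall P, P \in K -> pg_point P) ->
  (\sum_(L in [set L | pg_line L & (X <= L)%MS]) #|[set P in K | (P <= L)%MS] :\ X|
    = #|K :\ X|)%N.
Proof.
move=> pX pK.
rewrite -sum1_card.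
have e : forall P, P \in K :\ X ->
    (\sum_(L in [set L | pg_line L & (X <= L)%MS]) ((P <= L)%MS : nat) = 1)%N.
  move=> P; rewrite !inE => /andP [nPX PK].
  rewrite sum_ind.
  have -> : [set x in [set L | pg_line L & (X <= L)%MS] | (P <= x)%MS] =
      [set L | pg_line L & (X <= L)%MS && (P <= L)%MS].
    by apply/setP => L; rewrite !inE andbA.
  by rewrite unique_line ?cards1 // ?pK // eq_sym.
rewrite -(eq_bigr _ e) exchange_big /=.
apply: eq_bigr => L _; rewrite sum_ind; apply: eq_card => P; rewrite !inE.
by rewrite andbA.
Qed.

Lemma meet_unique (F : finFieldType) (L M : 'M[F]_3) :
  pg_line L -> pg_line M -> L != M ->
  exists Q, [set P | pg_point P & (P <= L)%MS && (P <= M)%MS] = [set Q].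
Proof.
move=> lL lM nLM.
have [Q [pQ QL QM]] := meet_exists lL lM.
exists Q; apply/setP => P; rewrite !inE; apply/idP/eqP; last first.
  by move=> ->; rewrite pQ QL QM.
case/and3P=> pP PL PM; apply/eqP; apply/negP => /negP nPQ.
have rQ : (\rank Q <= 1)%N by case/andP: pQ => /eqP ->.
have nQP := pt_neq_nsub pP pQ nPQ.
move: nLM; rewrite -(line_eq pP lL rQ nQP PL QL).
by rewrite (line_eq pP lM rQ nQP PM QM) eqxx.
Qed.

Lemma arith (q t : nat) : (7 <= q)%N -> (3 * (q * (q - 3)) = t * (q - 2))%N ->
  q = 8%N /\ t = 20%N.
Proof.
move=> q7 h.
have d : (q - 2 %| 6)%N.
  have e : (3 * (q * (q - 3)) + 6 = (q - 2) * (3 * q - 3))%N by nia.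
  have : (q - 2 %| 3 * (q * (q - 3)) + 6)%N by rewrite e dvdn_mulr.
  by rewrite (dvdn_addr _ (_ : q - 2 %| 3 * (q * (q - 3)))%N) // h dvdn_mull.
have := dvdn_leq (isT : (0 < 6)%N) d => le.
have [e|e] : q = 7%N \/ q = 8%N by lia.
  by subst q; lia.
by subst q; lia.
Qed.

Lemma card_notin (T : finType) (A : {set T}) x : x \notin A -> #|A :\ x| = #|A|.
Proof. by move=> nA; rewrite (cardsD1 x A) (negbTE nA). Qed.

Close Scope ring_scope.
Unset Implicit Arguments. Set Strict Implicit. Set Printing Implicit Defensive.

Theorem mainTheorem16 (F : finFieldType) (K : {set 'M[F]_3}) :
  (7 <= #|F|)%N ->
  (forall P, P \in K -> pg_point P) ->
  #|K| = (#|F| * (#|F| - 3))%N ->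
  exists L : 'M[F]_3, pg_line L /\
    #|[set P in K | incident P L]| \notin [:: 0%N; (#|F| - 3)%N; (#|F| - 2)%N].
Proof.
move=> q7 pK cK.
rewrite /incident.
have [q qE] : {q | #|F| = q} by exists #|F|.
rewrite qE in q7 cK *.
set kL := fun L : 'M[F]_3 => #|[set P in K | (P <= L)%MS]|.
case: (boolP [exists L : 'M[F]_3, pg_line L && (kL L \notin [:: 0%N; (q - 3)%N; (q - 2)%N])]).
  by case/existsP => L /andP [lL h]; exists L; split.
move=> /existsPn Hn; exfalso.
have H : forall L, pg_line L -> [\/ kL L = 0%N, kL L = (q - 3)%N | kL L = (q - 2)%N].
  move=> L lL; have := Hn L; rewrite lL /= negbK !inE.
  by case/or3P => /eqP; [constructor 1 | constructor 2 | constructor 3].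
set B := [set L | pg_line L & kL L == (q - 2)%N].
have v3 : forall X, X \in K -> #|[set L in B | (X <= L)%MS]| = 3%N.
  move=> X XK; have pX := pK X XK.
  have P1 := partition_through pX pK.
  have e : forall L, L \in [set L | pg_line L & (X <= L)%MS] ->
      #|[set P in K | (P <= L)%MS] :\ X| = ((q - 4) + (kL L == (q - 2)%N))%N.
    move=> L; rewrite inE => /andP [lL XL].
    have h : kL L = (1 + #|[set P in K | (P <= L)%MS] :\ X|)%N.
      by rewrite /kL (cardsD1 X) inE XK XL.
    move: h; set S := #|_ :\ X|; move=> h.
    case: (H L lL) => E; rewrite E in h *; rewrite ?eqxx /=.
    - lia.
    - have -> : (q - 3 == q - 2)%N = false by apply/eqP; lia.
      rewrite /=.
      lia.
    - lia.
  rewrite (eq_bigr _ e) big_split /= sum_nat_const sum_ind lines_through // in P1.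
  have -> : [set L in B | (X <= L)%MS] =
     [set x in [set L | pg_line L & (X <= L)%MS] | kL x == (q - 2)%N].
    by apply/setP => L; rewrite !inE andbAC.
  have hK := cardsD1 X K; rewrite XK cK /= in hK.
  move: P1 hK; rewrite ?qE; set a := #|K :\ X|; set b := #|[set x in _ | _]|; nia.
have tb : (3 * #|K| = #|B| * (q - 2))%N.
  transitivity (\sum_(X in K) #|[set L in B | (X <= L)%MS]|)%N.
    by rewrite (eq_bigr _ v3) sum_nat_const mulnC.
  under eq_bigr do rewrite -sum_ind.
  rewrite exchange_big /= -sum_nat_const; apply: eq_bigr => L.
  by rewrite inE => /andP [_ /eqP <-]; rewrite sum_ind.
have [q8 B20] : q = 8%N /\ #|B| = 20%N by apply: arith; rewrite // -cK.
set C := [set Q | pg_point Q & Q \notin K].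
set Z := [set L | pg_line L & kL L == 0%N].
pose v := fun Q : 'M[F]_3 => #|[set L in B | (Q <= L)%MS]|.
pose w := fun Q : 'M[F]_3 => #|[set L in Z | (Q <= L)%MS]|.
have s3 : forall Q, Q \in C -> (v Q = 0%N /\ w Q = 1%N) \/ (v Q = 5%N /\ w Q = 2%N).
  move=> Q; rewrite inE => /andP [pQ nQK].
  have P1 := partition_through pQ pK.
  set LQ := [set L | pg_line L & (Q <= L)%MS] in P1.
  have e : forall L, L \in LQ -> #|[set P in K | (P <= L)%MS] :\ Q| =
      ((q - 3) * (kL L == q - 3) + (q - 2) * (kL L == q - 2))%N.
    move=> L; rewrite inE => /andP [lL _]; rewrite card_notin; last by rewrite inE (negbTE nQK).
    by case: (H L lL); rewrite /kL => ->; rewrite q8.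
  have e1 : forall L, L \in LQ -> 1%N = ((kL L == 0) + (kL L == q - 3) + (kL L == q - 2))%N.
    move=> L; rewrite inE => /andP [lL _].
    by case: (H L lL) => ->; rewrite q8.
  rewrite (eq_bigr _ e) big_split /= -!big_distrr /= !sum_ind card_notin // in P1.
  move: P1; have := lines_through pQ; rewrite -sum1_card (eq_bigr _ e1) !big_split /= !sum_ind.
  have -> : [set x in LQ | kL x == (q - 2)%N] = [set L in B | (Q <= L)%MS].
    by apply/setP => L; rewrite !inE andbAC.
  have -> : [set x in LQ | kL x == 0%N] = [set L in Z | (Q <= L)%MS].
    by apply/setP => L; rewrite !inE andbAC.
  rewrite qE cK -/(v Q) -/(w Q).
  set a := #|[set x in LQ | _ == (q - 3)%N]|; rewrite -/(v Q) -/(w Q).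
  move: (v Q) (w Q) => vv ww; lia.
have N2 : #|[set Q in C | v Q == 5%N]| = 12%N.
  have e4 : forall L, L \in B -> #|[set Q in C | (Q <= L)%MS]| = 3%N.
    move=> L; rewrite inE => /andP [lL /eqP kb].
    have := cardsID K [set P | pg_point P & (P <= L)%MS].
    rewrite pts_on_line // qE.
    have -> : [set P | pg_point P & (P <= L)%MS] :&: K = [set P in K | (P <= L)%MS].
      apply/setP => P; rewrite !inE; case PK: (P \in K); rewrite ?andbT ?andbF //=.
      by rewrite pK.
    have -> : [set P | pg_point P & (P <= L)%MS] :\: K = [set Q in C | (Q <= L)%MS].
      apply/setP => P; rewrite !inE.
      by case: (P \in K) (pg_point P) (P <= L)%MS => [] [] [].
    move: kb; rewrite /kL => kb; rewrite kb q8; set c := #|[set Q in C | _]|; lia.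
  have e5 : forall Q, Q \in C -> v Q = (5 * (v Q == 5%N))%N.
    by move=> Q /s3 [[-> _]|[-> _]].
  have h : (\sum_(L in B) #|[set Q in C | (Q <= L)%MS]| = 60)%N.
    by rewrite (eq_bigr _ e4) sum_nat_const B20.
  have h2 : (\sum_(L in B) #|[set Q in C | (Q <= L)%MS]| = \sum_(Q in C) v Q)%N.
    under eq_bigr do rewrite -sum_ind.
    rewrite exchange_big /=; apply: eq_bigr => Q _; by rewrite sum_ind.
  rewrite h2 (eq_bigr _ e5) -big_distrr /= sum_ind in h.
  move: h; set c := #|[set Q in C | _]|; lia.
set z := #|Z|.
have a1 : forall L, L \in Z -> #|[set Q in C | (Q <= L)%MS]| = 9%N.
  move=> L; rewrite inE => /andP [lL /eqP k0].
  have k0' : [set P in K | (P <= L)%MS] = set0 by apply: cards0_eq.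
  have -> : [set Q in C | (Q <= L)%MS] = [set P | pg_point P & (P <= L)%MS].
    apply/setP => P; rewrite !inE; case PL: (P <= L)%MS; rewrite ?andbT ?andbF //.
    case PK: (P \in K) => //=; last by rewrite andbT.
    by have := in_set0 P; rewrite -k0' inE PK PL.
  by rewrite pts_on_line // qE q8.
have a2 : forall L M, L \in Z -> M \in Z -> L != M ->
    #|[set Q in C | (Q <= L)%MS && (Q <= M)%MS]| = 1%N.
  move=> L M; rewrite !inE => /andP [lL /eqP k0] /andP [lM _] nLM.
  have k0' : [set P in K | (P <= L)%MS] = set0 by apply: cards0_eq.
  have [Q0 e] := meet_unique lL lM nLM.
  rewrite (_ : [set Q in C | (Q <= L)%MS && (Q <= M)%MS] = [set Q0]) ?cards1 // -e.
  apply/setP => P; rewrite !inE.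
  case PL: (P <= L)%MS; rewrite ?andbF ?andbT //=.
  case PK: (P \in K) => /=; last by rewrite andbT.
  by have := in_set0 P; rewrite -k0' inE PK PL.
pose g := fun L M : 'M[F]_3 => (\sum_(Q in C) ((Q <= L)%MS * (Q <= M)%MS))%N.
have gE : forall L M, g L M = #|[set Q in C | (Q <= L)%MS && (Q <= M)%MS]|.
  move=> L M; rewrite /g -sum_ind; apply: eq_bigr => Q _; by rewrite mulnb.
have S1 : (\sum_(L in Z) \sum_(M in Z) g L M = z * (9 + (z - 1)))%N.
  rewrite -sum_nat_const; apply: eq_bigr => L LZ.
  rewrite (bigD1 L) //= (_ : g L L = 9%N); last first.
    by rewrite gE -(a1 L LZ); apply: eq_card => Q; rewrite !inE andbb.
  congr (_ + _)%N.
  rewrite (eq_bigr (fun _ => 1%N)); last first.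
    by move=> M /andP [MZ nML]; rewrite gE a2 // eq_sym.
  rewrite sum1dep_card /z (cardsD1 L Z) LZ /= add1n subSS subn0.
  by apply: eq_card => M; rewrite !inE andbC.
have S2 : (\sum_(L in Z) \sum_(M in Z) g L M = \sum_(Q in C) w Q * w Q)%N.
  transitivity (\sum_(L in Z) \sum_(Q in C) \sum_(M in Z) ((Q <= L)%MS * (Q <= M)%MS))%N.
    by apply: eq_bigr => L _; rewrite /g exchange_big.
  rewrite exchange_big /=; apply: eq_bigr => Q _.
  under eq_bigr do rewrite -big_distrr /=.
  by rewrite -big_distrl /= !sum_ind.
have S3 : (\sum_(Q in C) w Q = z * 9)%N.
  transitivity (\sum_(L in Z) #|[set Q in C | (Q <= L)%MS]|)%N; last first.
    by rewrite (eq_bigr _ a1) sum_nat_const.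
  under [RHS]eq_bigr do rewrite -sum_ind.
  rewrite [RHS]exchange_big /=; apply: eq_bigr => Q _; by rewrite sum_ind.
have e6 : forall Q, Q \in C -> (w Q * w Q = w Q + 2 * (v Q == 5%N))%N.
  by move=> Q /s3 [[-> ->]|[-> ->]].
rewrite S2 (eq_bigr _ e6) big_split /= S3 -big_distrr /= sum_ind N2 in S1.
have [le5|ge6] := leqP z 5; nia.
Qed.
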